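(* Consider the dynamic trial-offer market with social influence under the quality ranking with $n\ge2$ products, visibilities $v_1\ge v_2\ge\cdots\ge v_n>0$, initial appeals $A_1,\dots,A_n>0$ and qualities $1\ge q_1>q_2>\cdots>q_n\ge 0$. Then almost surely $\frac{d_{1,t}}{\sum_{j=1}^n d_{j,t}}\to1$ as $t\to\infty$, i.e. the market converges almost surely to a monopoly for product 1 (the product of highest quality).
   Context: Dynamic trial-offer market with social influence under the quality ranking: product $i$ is permanently displayed in position $i$ with visibility $v_i$. Let $d_{i,t}$ be the number of purchases of product $i$ before step $t$ ($d_{i,1}=0$) and $a_{i,t}=A_i+d_{i,t}$. At step $t$ one participant tries product $i$ with probability $\frac{v_i a_{i,t}}{\sum_j v_j a_{j,t}}$, then purchases it with probability $q_i$ (independently); if purchased, $d_{i,t+1}=d_{i,t}+1$, all other counts unchanged. The market share of product $i$ at step $t$ is $d_{i,t}/\sum_j d_{j,t}$. *)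

(* Defs.v *)
From Stdlib Require Import Reals.
Open Scope R_scope.

(* Products are indexed 0..n-1 (paper's product i is index i-1).
   A market state is the vector of purchase counts d : nat -> nat. *)

Fixpoint rsum (n : nat) (f : nat -> R) : R :=
  match n with
  | O => 0
  | S k => rsum k f + f k
  end.

Definition incr (d : nat -> nat) (i : nat) : nat -> nat :=
  fun j => if Nat.eqb j i then S (d j) else d j.

Definition appeal (A : nat -> R) (d : nat -> nat) (i : nat) : R := A i + INR (d i).

Definition ptry (n : nat) (v A : nat -> R) (d : nat -> nat) (i : nat) : R :=
  v i * appeal A d i / rsum n (fun j => v j * appeal A d j).

Definition pbuy (n : nat) (v A q : nat -> R) (d : nat -> nat) (i : nat) : R :=
  ptry n v A d i * q i.

Definition share1 (n : nat) (d : nat -> nat) : R :=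
  INR (d 0%nat) / rsum n (fun j => INR (d j)).

(* hitprob n v A q B T s d : probability that, starting at step s in state d
   (d = d_{.,s}) and running the chain for T further steps, there is a step
   s' in [s, s+T] with B s' d_{.,s'} = true. *)
Fixpoint hitprob (n : nat) (v A q : nat -> R) (B : nat -> (nat -> nat) -> bool)
    (T s : nat) (d : nat -> nat) : R :=
  if B s d then 1 else
  match T with
  | O => 0
  | S T' =>
      rsum n (fun i => pbuy n v A q d i * hitprob n v A q B T' (S s) (incr d i))
      + (1 - rsum n (fun i => pbuy n v A q d i)) * hitprob n v A q B T' (S s) d
  end.

Definition far_after (n : nat) (eps : R) (t : nat) : nat -> (nat -> nat) -> bool :=
  fun s d => andb (Nat.leb t s)
                  (if Rlt_dec eps (Rabs (share1 n d - 1)) then true else false).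

(* P( exists s with t <= s <= T : |d_{1,s}/sum_j d_{j,s} - 1| > eps ),
   the chain starting at step 1 with d_{.,1} = 0. *)
Definition prob_far (n : nat) (v A q : nat -> R) (eps : R) (t T : nat) : R :=
  hitprob n v A q (far_after n eps t) (T - 1) 1 (fun _ => 0%nat).

(* Almost sure convergence of the share of product 1 to 1, expressed through
   the finite-horizon laws: for every eps > 0,
   P(sup_{s >= t} |X_s - 1| > eps) -> 0 as t -> oo, where
   P(exists s >= t, ...) = sup_T P(exists s in [t,T], ...). *)
Definition as_monopoly (n : nat) (v A q : nat -> R) : Prop :=
  forall eps delta : R, 0 < eps -> 0 < delta ->
    exists t0 : nat, forall t T : nat, (t0 <= t)%nat ->
      prob_far n v A q eps t T <= delta.

(* Main.v *)
Require Import Defs.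
From Stdlib Require Import Reals Lra Lia Classical.
Open Scope R_scope.

Lemma rsum_ext n f g : (forall i, (i < n)%nat -> f i = g i) -> rsum n f = rsum n g.
Proof. induction n; intros H; simpl; auto. f_equal; [apply IHn; intros; apply H; lia| apply H; lia]. Qed.

Lemma rsum_le n f g : (forall i, (i < n)%nat -> f i <= g i) -> rsum n f <= rsum n g.
Proof. induction n; intros H; simpl; [lra|]. assert (rsum n f <= rsum n g) by (apply IHn; intros; apply H; lia).
 assert (f n <= g n) by (apply H; lia). lra. Qed.

Lemma rsum_plus n f g : rsum n (fun i => f i + g i) = rsum n f + rsum n g.
Proof. induction n; simpl; [lra|]. rewrite IHn; ring. Qed.

Lemma rsum_scal n c f : rsum n (fun i => c * f i) = c * rsum n f.
Proof. induction n; simpl; [ring|]. rewrite IHn; ring. Qed.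

Lemma rsum_nonneg n f : (forall i, (i < n)%nat -> 0 <= f i) -> 0 <= rsum n f.
Proof. intros H. replace 0 with (rsum n (fun _ => 0)). apply rsum_le; auto.
 clear H; induction n; simpl; auto; rewrite IHn; ring. Qed.

Lemma rsum_const n c : rsum n (fun _ => c) = INR n * c.
Proof. induction n; simpl rsum; [simpl; ring|]. rewrite IHn, S_INR; ring. Qed.

Lemma rsum_split0 n f : (1 <= n)%nat ->
  rsum n f = f 0%nat + rsum n (fun i => if Nat.eqb i 0 then 0 else f i).
Proof. induction n; intros Hn; [lia|]. destruct n. simpl. lra.
 change (rsum (S (S n)) f) with (rsum (S n) f + f (S n)).
 change (rsum (S (S n)) (fun i => if Nat.eqb i 0 then 0 else f i)) with
  (rsum (S n) (fun i => if Nat.eqb i 0 then 0 else f i) + (if Nat.eqb (S n) 0 then 0 else f (S n))).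
 rewrite IHn by lia. change (if Nat.eqb (S n) 0 then 0 else f (S n)) with (f (S n)). lra. Qed.

Lemma rsum_minus n P X Y :
  rsum n (fun i => P i * (X i - Y)) = rsum n (fun i => P i * X i) - rsum n P * Y.
Proof. induction n; simpl; [ring|]. rewrite IHn; ring. Qed.

Lemma supermart_form n P X Y :
  rsum n (fun i => P i * (X i - Y)) <= 0 ->
  rsum n (fun i => P i * X i) + (1 - rsum n P) * Y <= Y.
Proof. rewrite rsum_minus. intros; lra. Qed.

Lemma rsum_change n i f g : (i < n)%nat -> (forall j, (j < n)%nat -> j <> i -> g j = f j) ->
  rsum n g = rsum n f + (g i - f i).
Proof. induction n; intros Hi H; [lia|]. simpl.
 destruct (Nat.eq_dec i n) as [->|Hne].
 - rewrite (rsum_ext n g f) by (intros; apply H; lia). ring.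
 - rewrite IHn by (try lia; intros; apply H; lia). rewrite (H n) by lia. ring. Qed.

Lemma rsum_pigeon n f b : (1 <= n)%nat -> (forall i, (1 <= i < n)%nat -> f i <= b) ->
  rsum n f <= f 0%nat + INR (n - 1) * b.
Proof. induction n; intros Hn H; [lia|]. destruct n. simpl; lra.
 change (rsum (S (S n)) f) with (rsum (S n) f + f (S n)).
 assert (rsum (S n) f <= f 0%nat + INR (S n - 1) * b) by (apply IHn; [lia| intros; apply H; lia]).
 assert (f (S n) <= b) by (apply H; lia).
 replace (S (S n) - 1)%nat with (S (S n - 1)) by lia. rewrite S_INR. lra. Qed.

Fixpoint rprod (k : nat) (f : nat -> R) : R :=
  match k with O => 1 | S k' => rprod k' f * f k' end.

Lemma rprod_pos k f : (forall j, (j < k)%nat -> 0 < f j) -> 0 < rprod k f.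
Proof. induction k; intros H; simpl; [lra|]. apply Rmult_lt_0_compat; [apply IHk; intros; apply H; lia| apply H; lia]. Qed.

Lemma rprod_le k f g : (forall j, (j < k)%nat -> 0 <= f j <= g j) -> rprod k f <= rprod k g.
Proof. induction k; intros H; simpl; [lra|].
 assert (0 <= rprod k f). { clear IHk. induction k; simpl; [lra|]. apply Rmult_le_pos; [apply IHk; intros; apply H; lia| apply H; lia]. }
 apply Rmult_le_compat; auto; first [apply IHk; intros; apply H; lia | apply H; lia]. Qed.

Lemma rprod_pow k f e : (rprod k f) ^ e = rprod k (fun j => f j ^ e).
Proof. induction k; simpl; [apply pow1|]. rewrite Rpow_mult_distr, IHk; auto. Qed.

Lemma rprod_add a b f : rprod (a + b) f = rprod a f * rprod b (fun j => f (a + j)%nat).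
Proof. induction b; simpl. rewrite Nat.add_0_r; ring. rewrite Nat.add_succ_r; simpl; rewrite IHb; ring. Qed.

Lemma rprod_tele k (z : nat -> R) : (forall j, (j <= k)%nat -> 0 < z j) ->
  rprod k (fun j => z j / z (S j)) = z 0%nat / z k.
Proof. induction k; intros H; simpl. field. assert (0 < z 0%nat) by (apply H; lia); lra.
 rewrite IHk by (intros; apply H; lia). assert (0 < z k) by (apply H; lia). assert (0 < z (S k)) by (apply H; lia). assert (0 < z 0%nat) by (apply H; lia). field; repeat split; lra.
Qed.

Lemma rprod_tele2 k (z : nat -> R) : (forall j, (j <= k)%nat -> 0 < z j) ->
  rprod k (fun j => z (S j) / z j) = z k / z 0%nat.
Proof. induction k; intros H; simpl. field. assert (0 < z 0%nat) by (apply H; lia); lra.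
 rewrite IHk by (intros; apply H; lia). assert (0 < z k) by (apply H; lia). assert (0 < z (S k)) by (apply H; lia). assert (0 < z 0%nat) by (apply H; lia). field; repeat split; lra.
Qed.

Lemma bernoulli h e : -1 <= h -> 1 + INR e * h <= (1 + h) ^ e.
Proof. intros Hh. induction e; [simpl; lra|]. rewrite S_INR. simpl pow.
 assert (0 <= 1 + h) by lra. assert (0 <= INR e * h * h). { destruct e. simpl; lra. assert (0 < INR (S e)) by (apply lt_0_INR; lia). nra. }
 nra. Qed.

Lemma pow_lt_strict x y e : (1 <= e)%nat -> 0 <= x -> x < y -> x ^ e < y ^ e.
Proof. intros He Hx Hy. destruct e; [lia|]. simpl.
 assert (x ^ e <= y ^ e) by (apply pow_incr; lra). assert (0 < y ^ e) by (apply pow_lt; lra).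
 assert (0 <= x ^ e) by (apply pow_le; lra). nra. Qed.

Lemma div_nn a b : 0 <= a -> 0 < b -> 0 <= a / b.
Proof. intros. unfold Rdiv. apply Rmult_le_pos; auto. left; apply Rinv_0_lt_compat; auto. Qed.

Lemma hit_bound n v A q B (Inv : (nat -> nat) -> Prop) (V : nat -> (nat -> nat) -> R) :
 (forall s d, Inv d -> 0 <= V s d) ->
 (forall s d, Inv d -> B s d = true -> 1 <= V s d) ->
 (forall s d, Inv d -> rsum n (fun i => pbuy n v A q d i * V (S s) (incr d i))
     + (1 - rsum n (fun i => pbuy n v A q d i)) * V (S s) d <= V s d) ->
 (forall d i, Inv d -> (i < n)%nat -> pbuy n v A q d i <> 0 -> Inv (incr d i)) ->
 (forall d i, (i < n)%nat -> 0 <= pbuy n v A q d i) ->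
 (forall d, rsum n (fun i => pbuy n v A q d i) <= 1) ->
 forall T s d, Inv d -> hitprob n v A q B T s d <= V s d.
Proof.
 intros H0 H1 H2 H3 H4 H5 T. induction T; intros s d Hd; simpl.
 - destruct (B s d) eqn:E; [apply H1; auto| apply H0; auto].
 - destruct (B s d) eqn:E; [apply H1; auto|].
   eapply Rle_trans; [|apply (H2 s d Hd)].
   apply Rplus_le_compat.
   + apply rsum_le. intros i Hi.
     destruct (Req_dec (pbuy n v A q d i) 0) as [Z|Z].
     * rewrite Z; lra.
     * apply Rmult_le_compat_l; [apply H4; auto|]. apply IHT. apply H3; auto.
   + apply Rmult_le_compat_l; [specialize (H5 d); lra|]. apply IHT; auto.
Qed.

Definition good (n : nat) (v A q : nat -> R) : Prop :=
  (2 <= n)%nat /\ (forall i : nat, (S i < n)%nat -> v (S i) <= v i) /\ 0 < v (n - 1)%nat /\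
  (forall i : nat, (i < n)%nat -> 0 < A i) /\ q 0%nat <= 1 /\
  (forall i : nat, (S i < n)%nat -> q (S i) < q i) /\ 0 <= q (n - 1)%nat.

Lemma v_mono n v A q : good n v A q -> forall k i, (i + k < n)%nat -> v (i + k)%nat <= v i.
Proof. intros G k; induction k; intros i Hi. rewrite Nat.add_0_r; lra.
 destruct G as (_&Hv&_). replace (i + S k)%nat with (S (i + k)) by lia.
 eapply Rle_trans; [apply Hv; lia| apply IHk; lia]. Qed.

Lemma q_mono n v A q : good n v A q -> forall k i, (i + k < n)%nat -> q (i + k)%nat <= q i.
Proof. intros G k; induction k; intros i Hi. rewrite Nat.add_0_r; lra.
 destruct G as (_&_&_&_&_&Hq&_). replace (i + S k)%nat with (S (i + k)) by lia.
 eapply Rle_trans; [left; apply Hq; lia| apply IHk; lia]. Qed.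

Lemma v_le n v A q i j : good n v A q -> (i <= j)%nat -> (j < n)%nat -> v j <= v i.
Proof. intros G H1 H2. replace j with (i + (j - i))%nat by lia. apply (v_mono n v A q G); lia. Qed.

Lemma q_le n v A q i j : good n v A q -> (i <= j)%nat -> (j < n)%nat -> q j <= q i.
Proof. intros G H1 H2. replace j with (i + (j - i))%nat by lia. apply (q_mono n v A q G); lia. Qed.

Lemma q_lt n v A q i j : good n v A q -> (i < j)%nat -> (j < n)%nat -> q j < q i.
Proof. intros G H1 H2. pose proof G as (_&_&_&_&_&Hq&_).
 apply Rle_lt_trans with (q (S i)). apply (q_le n v A q); auto. apply Hq; lia. Qed.

Lemma v_pos n v A q i : good n v A q -> (i < n)%nat -> 0 < v i.
Proof. intros G H. pose proof G as (_&_&Hv&_). eapply Rlt_le_trans; [apply Hv|]. apply (v_le n v A q); auto; lia. Qed.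

Lemma q_nn n v A q i : good n v A q -> (i < n)%nat -> 0 <= q i.
Proof. intros G H. pose proof G as (_&_&_&_&_&_&Hq). eapply Rle_trans; [apply Hq|]. apply (q_le n v A q); auto; lia. Qed.

Lemma q_le1 n v A q i : good n v A q -> (i < n)%nat -> q i <= 1.
Proof. intros G H. pose proof G as (_&_&_&_&Hq&_). eapply Rle_trans; [|apply Hq]. apply (q_le n v A q); auto; lia. Qed.

Lemma appeal_pos n v A q d i : good n v A q -> (i < n)%nat -> 0 < appeal A d i.
Proof. intros G H. pose proof G as (_&_&_&HA&_). unfold appeal. pose proof (pos_INR (d i)). pose proof (HA i H). lra. Qed.

Definition Ssum n v A d := rsum n (fun j => v j * appeal A d j).

Lemma S_pos n v A q d : good n v A q -> 0 < Ssum n v A d.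
Proof. intros G. pose proof G as (Hn&_). unfold Ssum. rewrite rsum_split0 by lia.
 assert (0 < v 0%nat * appeal A d 0%nat) by (apply Rmult_lt_0_compat; [apply (v_pos n v A q)|apply (appeal_pos n v A q)]; auto; lia).
 assert (0 <= rsum n (fun i => if Nat.eqb i 0 then 0 else v i * appeal A d i)).
 { apply rsum_nonneg. intros i Hi. destruct (Nat.eqb i 0); [lra|]. apply Rmult_le_pos; left; [apply (v_pos n v A q)|apply (appeal_pos n v A q)]; auto. }
 lra. Qed.

Lemma pbuy_eq n v A q d i : pbuy n v A q d i = v i * appeal A d i * q i / Ssum n v A d.
Proof. unfold pbuy, ptry, Ssum. unfold Rdiv. ring. Qed.

Lemma pbuy_nn n v A q d i : good n v A q -> (i < n)%nat -> 0 <= pbuy n v A q d i.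
Proof. intros G H. rewrite pbuy_eq. apply Rmult_le_pos; [|left; apply Rinv_0_lt_compat, (S_pos n v A q); auto].
 apply Rmult_le_pos; [apply Rmult_le_pos; left|]; [apply (v_pos n v A q)|apply (appeal_pos n v A q)|apply (q_nn n v A q)]; auto. Qed.

Lemma sum_pbuy n v A q d : rsum n (fun i => pbuy n v A q d i) =
  rsum n (fun i => v i * appeal A d i * q i) / Ssum n v A d.
Proof. unfold Rdiv. rewrite Rmult_comm, <- rsum_scal. apply rsum_ext; intros. rewrite pbuy_eq. unfold Rdiv; ring. Qed.

Lemma sum_pbuy_le1 n v A q d : good n v A q -> rsum n (fun i => pbuy n v A q d i) <= 1.
Proof. intros G. rewrite sum_pbuy. pose proof (S_pos n v A q d G).
 apply Rmult_le_reg_r with (Ssum n v A d); auto. unfold Rdiv. rewrite Rmult_assoc, Rinv_l by lra. rewrite Rmult_1_r, Rmult_1_l.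
 unfold Ssum. apply rsum_le. intros i Hi.
 assert (0 < v i * appeal A d i) by (apply Rmult_lt_0_compat; [apply (v_pos n v A q)|apply (appeal_pos n v A q)]; auto).
 pose proof (q_le1 n v A q i G Hi). nra. Qed.

Fixpoint nsum (n : nat) (d : nat -> nat) : nat :=
  match n with O => O | S k => (nsum k d + d k)%nat end.

Lemma nsum_incr n d i : (i < n)%nat -> nsum n (incr d i) = S (nsum n d).
Proof. induction n; intros H; [lia|]. simpl. unfold incr at 2.
 destruct (Nat.eq_dec i n) as [->|Hne].
 - rewrite Nat.eqb_refl. assert (nsum n (incr d n) = nsum n d).
   { clear IHn H. assert (forall k, (k <= n)%nat -> nsum k (incr d n) = nsum k d).
     { induction k; intros; simpl; auto. rewrite IHk by lia. unfold incr. replace (Nat.eqb k n) with false; auto. symmetry; apply Nat.eqb_neq; lia. }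
     apply H; lia. }
   rewrite H0; lia.
 - replace (Nat.eqb n i) with false by (symmetry; apply Nat.eqb_neq; lia). rewrite IHn by lia. lia. Qed.

Lemma INR_nsum n d : INR (nsum n d) = rsum n (fun j => INR (d j)).
Proof. induction n; simpl nsum; simpl rsum; [reflexivity|]. rewrite plus_INR, IHn; reflexivity. Qed.

Definition Inv (n : nat) (q : nat -> R) (d : nat -> nat) : Prop := q (n - 1)%nat = 0 -> d (n - 1)%nat = 0%nat.

Lemma Inv_incr n v A q d i : Inv n q d -> (i < n)%nat -> pbuy n v A q d i <> 0 -> Inv n q (incr d i).
Proof. unfold Inv, incr. intros H Hi Hp Hq. destruct (Nat.eqb (n-1) i) eqn:E.
 - apply Nat.eqb_eq in E. subst i. exfalso; apply Hp. unfold pbuy. rewrite Hq; ring.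
 - auto. Qed.

Lemma Inv0 n q : Inv n q (fun _ => 0%nat).
Proof. unfold Inv; auto. Qed.

Lemma pm_exists n v A q : good n v A q -> exists pm, 0 < pm /\ pm <= 1 /\
  forall d, Inv n q d -> pm <= rsum n (fun i => pbuy n v A q d i).
Proof.
 intros G. assert (Hkey: exists pm, 0 < pm /\ forall d, Inv n q d -> pm <= rsum n (fun i => pbuy n v A q d i)).
 2:{ destruct Hkey as (pm&H1&H2). exists pm; split; auto; split; auto.
     eapply Rle_trans; [apply (H2 (fun _ => 0%nat)); apply Inv0|]. apply sum_pbuy_le1; auto. }
 pose proof G as (Hn&_&_&HA&_&_&Hqn).
 destruct Hqn as [Hqn|Hqn].
 - exists (q (n-1)%nat). split; auto. intros d _. rewrite sum_pbuy. pose proof (S_pos n v A q d G).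
   apply Rmult_le_reg_r with (Ssum n v A d); auto. unfold Rdiv. rewrite Rmult_assoc, Rinv_l by lra. rewrite Rmult_1_r.
   unfold Ssum. rewrite <- rsum_scal. apply rsum_le. intros i Hi.
   assert (0 < v i * appeal A d i) by (apply Rmult_lt_0_compat; [apply (v_pos n v A q)|apply (appeal_pos n v A q)]; auto).
   assert (q (n-1)%nat <= q i) by (apply (q_le n v A q); auto; lia). nra.
 - destruct n as [|n']; [lia|]. replace (S n' - 1)%nat with n' in * by lia.
   set (Q := q (n' - 1)%nat). assert (HQ : 0 < Q). { unfold Q. rewrite Hqn at 1. apply (q_lt (S n') v A q); auto; lia. }
   set (B := v 0%nat * A 0%nat). set (Y := v n' * A n').
   assert (HB : 0 < B) by (unfold B; apply Rmult_lt_0_compat; [apply (v_pos (S n') v A q)|apply HA]; auto; lia).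
   assert (HY : 0 < Y) by (unfold Y; apply Rmult_lt_0_compat; [apply (v_pos (S n') v A q)|apply HA]; auto; lia).
   exists (Q * (B / (B + Y))). split. apply Rmult_lt_0_compat; auto. apply Rdiv_lt_0_compat; lra.
   intros d Hd. unfold Inv in Hd. replace (S n' - 1)%nat with n' in Hd by lia. specialize (Hd (eq_sym Hqn)).
   rewrite sum_pbuy. pose proof (S_pos (S n') v A q d G).
   set (X := rsum n' (fun j => v j * appeal A d j)).
   assert (HS : Ssum (S n') v A d = X + Y). { unfold Ssum, X, Y. simpl rsum. unfold appeal. rewrite Hd. simpl INR. ring. }
   assert (HX : B <= X). { unfold X. rewrite rsum_split0 by lia.
     assert (B <= v 0%nat * appeal A d 0%nat). { unfold B, appeal. pose proof (pos_INR (d 0%nat)). assert (0 < v 0%nat) by (apply (v_pos (S n') v A q); auto; lia). nra. }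
     assert (0 <= rsum n' (fun i => if Nat.eqb i 0 then 0 else v i * appeal A d i)).
     { apply rsum_nonneg. intros i Hi. destruct (Nat.eqb i 0); [lra|]. apply Rmult_le_pos; left; [apply (v_pos (S n') v A q)|apply (appeal_pos (S n') v A q)]; auto. }
     lra. }
   assert (HN : Q * X <= rsum (S n') (fun i => v i * appeal A d i * q i)).
   { simpl rsum. rewrite <- Hqn. rewrite Rmult_0_r, Rplus_0_r. unfold X. rewrite <- rsum_scal. apply rsum_le. intros i Hi.
     assert (0 < v i * appeal A d i) by (apply Rmult_lt_0_compat; [apply (v_pos (S n') v A q)|apply (appeal_pos (S n') v A q)]; auto).
     assert (Q <= q i) by (unfold Q; apply (q_le (S n') v A q); auto; lia). nra. }
   rewrite HS. apply Rle_trans with (Q * X / (X + Y)).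
   + unfold Rdiv. rewrite Rmult_assoc. apply Rmult_le_compat_l; [lra|].
     apply Rmult_le_reg_r with ((B + Y) * (X + Y)); [nra|].
     replace (B * / (B + Y) * ((B + Y) * (X + Y))) with (B * (X + Y)) by (field; lra).
     replace (X * / (X + Y) * ((B + Y) * (X + Y))) with (X * (B + Y)) by (field; lra). nra.
   + unfold Rdiv. apply Rmult_le_compat_r; auto. left; apply Rinv_0_lt_compat; lra.
Qed.

Definition V1 (n : nat) (gam : R) (M t : nat) (s : nat) (d : nat -> nat) : R :=
  2 ^ M * (/ 2) ^ (nsum n d) * gam ^ s / gam ^ t.

Lemma V1_nn n gam M t s d : 0 < gam -> 0 <= V1 n gam M t s d.
Proof. intros H. unfold V1. assert (0 < gam ^ t) by (apply pow_lt; auto). assert (0 < gam ^ s) by (apply pow_lt; auto).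
 assert (0 < 2 ^ M) by (apply pow_lt; lra). assert (0 < (/2) ^ nsum n d) by (apply pow_lt; lra).
 left. unfold Rdiv. apply Rmult_lt_0_compat; [|apply Rinv_0_lt_compat; auto]. repeat apply Rmult_lt_0_compat; auto. Qed.

Lemma V1_super n v A q pm d s M t : good n v A q -> 0 < pm -> pm <= 1 ->
  pm <= rsum n (fun i => pbuy n v A q d i) ->
  let gam := / (1 - pm / 2) in
  rsum n (fun i => pbuy n v A q d i * V1 n gam M t (S s) (incr d i))
   + (1 - rsum n (fun i => pbuy n v A q d i)) * V1 n gam M t (S s) d <= V1 n gam M t s d.
Proof. intros G Hp Hp1 HP gam.
 assert (Hg : 0 < gam) by (unfold gam; apply Rinv_0_lt_compat; lra).
 rewrite (rsum_ext n _ (fun i => pbuy n v A q d i * (V1 n gam M t s d * (gam / 2)))).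
 2:{ intros i Hi. f_equal. unfold V1. rewrite nsum_incr by auto. simpl pow. field; repeat split; try (apply pow_nonzero); lra. }
 rewrite (rsum_ext n _ (fun i => (V1 n gam M t s d * (gam / 2)) * pbuy n v A q d i)) by (intros; ring).
 rewrite rsum_scal.
 replace (V1 n gam M t (S s) d) with (V1 n gam M t s d * gam) by (unfold V1; simpl pow; field; apply pow_nonzero; lra).
 set (P := rsum n (fun i => pbuy n v A q d i)). pose proof (V1_nn n gam M t s d Hg).
 assert (gam * (1 - P / 2) <= 1).
 { assert (gam * (1 - pm/2) = 1) by (unfold gam; field; lra). assert (pm <= P) by exact HP. nra. }
 replace (V1 n gam M t s d * (gam / 2) * P + (1 - P) * (V1 n gam M t s d * gam)) with (V1 n gam M t s d * (gam * (1 - P/2))) by (field).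
 nra. Qed.

Definition Hf (A : nat -> R) (p : R) (i k : nat) : R := rprod k (fun j => 1 + p / (A i + INR j)).
Definition Gf (A : nat -> R) (c : R) (K : nat) : R := rprod K (fun j => 1 - c / (A 0%nat + INR j)).
Definition Hs (n : nat) (A : nat -> R) (p : R) (d : nat -> nat) : R :=
  rsum n (fun i => if Nat.eqb i 0 then 0 else Hf A p i (d i)).
Definition Vb (n : nat) (A : nat -> R) (p c : R) (d : nat -> nat) : R := Gf A c (d 0%nat) * Hs n A p d.

Lemma Hf_pos A p i k : 0 < A i -> 0 <= p -> 0 < Hf A p i k.
Proof. intros HA Hp. unfold Hf. apply rprod_pos. intros j _. pose proof (pos_INR j).
 assert (0 <= p / (A i + INR j)) by (apply div_nn; lra). lra. Qed.

Lemma Gf_pos A c K : 0 < A 0%nat -> 0 <= c < A 0%nat -> 0 < Gf A c K.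
Proof. intros HA Hc. unfold Gf. apply rprod_pos. intros j _. pose proof (pos_INR j).
 assert (c / (A 0%nat + INR j) < 1). { apply Rmult_lt_reg_r with (A 0%nat + INR j); [lra|]. unfold Rdiv. rewrite Rmult_assoc, Rinv_l by lra. lra. }
 lra. Qed.

Lemma Hs_nn n A p d : (forall i, (i < n)%nat -> 0 < A i) -> 0 <= p -> 0 <= Hs n A p d.
Proof. intros HA Hp. unfold Hs. apply rsum_nonneg. intros i Hi. destruct (Nat.eqb i 0); [lra|]. left; apply Hf_pos; auto. Qed.

Lemma Vb_nn n A p c d : (forall i, (i < n)%nat -> 0 < A i) -> (1 <= n)%nat -> 0 <= p -> 0 <= c < A 0%nat -> 0 <= Vb n A p c d.
Proof. intros HA Hn Hp Hc. unfold Vb. apply Rmult_le_pos; [left; apply Gf_pos; auto; apply HA; lia| apply Hs_nn; auto]. Qed.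

Lemma Vb_super n v A q p c d : good n v A q -> 0 <= p -> 0 <= c < A 0%nat ->
  (forall i, (1 <= i < n)%nat -> v i * q i * p <= v 0%nat * q 0%nat * c) ->
  rsum n (fun i => pbuy n v A q d i * Vb n A p c (incr d i))
   + (1 - rsum n (fun i => pbuy n v A q d i)) * Vb n A p c d <= Vb n A p c d.
Proof.
 intros G Hp Hc Hw. apply supermart_form. pose proof G as (Hn&_&_&HA&_).
 set (SS := Ssum n v A d). assert (HS : 0 < SS) by (apply (S_pos n v A q); auto).
 set (Gd := Gf A c (d 0%nat)). assert (HG : 0 < Gd) by (apply Gf_pos; auto; apply HA; lia).
 set (H := Hs n A p d). assert (HH : 0 <= H) by (apply Hs_nn; auto).
 rewrite (rsum_ext n _ (fun i => if Nat.eqb i 0 then -(v 0%nat * q 0%nat * c / SS) * Gd * H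
                                 else (v i * q i * p / SS) * Gd * Hf A p i (d i))).
 2:{ intros i Hi. rewrite pbuy_eq. fold SS. unfold Vb. destruct (Nat.eqb i 0) eqn:E.
   - apply Nat.eqb_eq in E; subst i.
     assert (Hinc : incr d 0 0%nat = S (d 0%nat)) by (unfold incr; simpl; auto).
     rewrite Hinc. unfold Gf at 1. simpl rprod. fold (Gf A c (d 0%nat)). fold Gd.
     assert (Hs n A p (incr d 0) = H).
     { unfold H, Hs. apply rsum_ext. intros j Hj. destruct (Nat.eqb j 0) eqn:E; auto. unfold incr. rewrite E; auto. }
     rewrite H0. unfold appeal. pose proof (pos_INR (d 0%nat)). pose proof (HA 0%nat ltac:(lia)).
     change (Hs n A p d) with H. field. lra.
   - apply Nat.eqb_neq in E.
     assert (Hinc : incr d i 0%nat = d 0%nat) by (unfold incr; replace (Nat.eqb 0 i) with false; auto; symmetry; apply Nat.eqb_neq; lia).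
     rewrite Hinc. fold Gd.
     assert (Hs n A p (incr d i) = H + (Hf A p i (S (d i)) - Hf A p i (d i))).
     { unfold H, Hs. rewrite (rsum_change n i (fun j => if Nat.eqb j 0 then 0 else Hf A p j (d j))
         (fun j => if Nat.eqb j 0 then 0 else Hf A p j (incr d i j))); auto.
       - replace (Nat.eqb i 0) with false by (symmetry; apply Nat.eqb_neq; auto). unfold incr. rewrite Nat.eqb_refl. reflexivity.
       - intros j Hj Hji. destruct (Nat.eqb j 0); auto. unfold incr. replace (Nat.eqb j i) with false; auto. symmetry; apply Nat.eqb_neq; auto. }
     rewrite H0. unfold Hf at 1. simpl rprod. fold (Hf A p i (d i)). change (Hs n A p d) with H.
     unfold appeal. pose proof (pos_INR (d i)). pose proof (HA i Hi).
     field. lra.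
 }
 rewrite rsum_split0 by lia. rewrite Nat.eqb_refl.
 assert (rsum n (fun i => if Nat.eqb i 0 then 0 else (if Nat.eqb i 0 then -(v 0%nat * q 0%nat * c / SS) * Gd * H
                                 else (v i * q i * p / SS) * Gd * Hf A p i (d i)))
   <= rsum n (fun i => (v 0%nat * q 0%nat * c / SS * Gd) * (if Nat.eqb i 0 then 0 else Hf A p i (d i)))).
 { apply rsum_le. intros i Hi. destruct (Nat.eqb i 0) eqn:E. lra.
   apply Nat.eqb_neq in E. pose proof (Hw i ltac:(lia)). pose proof (Hf_pos A p i (d i) (HA i Hi) Hp).
   unfold Rdiv. assert (0 < /SS) by (apply Rinv_0_lt_compat; auto).
   assert (v i * q i * p * /SS <= v 0%nat * q 0%nat * c * /SS) by (apply Rmult_le_compat_r; lra).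
   assert (0 < Gd * Hf A p i (d i)) by (apply Rmult_lt_0_compat; auto). nra. }
 rewrite rsum_scal in H0. change (Hs n A p d) with H in H0. unfold H, Hs in *. lra.
Qed.

Lemma rprod_one k : rprod k (fun _ => 1) = 1.
Proof. induction k; simpl; [|rewrite IHk]; ring. Qed.

Lemma rprod_nn k f : (forall j, (j < k)%nat -> 0 <= f j) -> 0 <= rprod k f.
Proof. induction k; intros H; simpl; [lra|]. apply Rmult_le_pos; [apply IHk; intros; apply H; lia| apply H; lia]. Qed.

Lemma H_growth A p i k m : 0 < A i -> (1 <= m)%nat -> p = / INR m ->
  (A i + INR k) / A i <= (Hf A p i k) ^ m.
Proof. intros HA Hm Hp. unfold Hf. rewrite rprod_pow.
 assert (Hm' : 0 < INR m) by (apply lt_0_INR; lia).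
 replace ((A i + INR k) / A i) with ((A i + INR k) / (A i + INR 0)) by (simpl INR; rewrite Rplus_0_r; auto).
 rewrite <- (rprod_tele2 k (fun j => A i + INR j)) by (intros; pose proof (pos_INR j); lra).
 apply rprod_le. intros j _. pose proof (pos_INR j). rewrite S_INR. split.
 apply div_nn; lra.
 eapply Rle_trans; [|apply bernoulli]. 2:{ subst p. assert (0 <= / INR m / (A i + INR j)) by (apply div_nn; [left; apply Rinv_0_lt_compat|]; lra). lra. }
 subst p. right. field. lra. Qed.

Lemma factor_bound A c r m j : 0 < A 0%nat -> (1 <= m)%nat -> c = INR r / (INR (S r) * INR m) -> 0 <= c < A 0%nat ->
  let z := fun j => A 0%nat + 1 + INR j in
  (z j / z (S j)) ^ r <= (1 - c / (A 0%nat + INR (S r + j))) ^ (m * S r).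
Proof. intros HA Hm Hc Hc2 z. unfold z. rewrite S_INR. set (w := A 0%nat + 1 + INR j). replace (A 0%nat + 1 + (INR j + 1)) with (w + 1) by (unfold w; ring).
 assert (Hw : 1 < w) by (unfold w; pose proof (pos_INR j); lra). assert (Hw0 : A 0%nat < w) by (unfold w; pose proof (pos_INR j); lra).
 replace (A 0%nat + INR (S r + j)) with (w + INR r) by (unfold w; rewrite plus_INR, S_INR; ring).
 assert (0 <= INR r) by apply pos_INR.
 assert (Hm' : 0 < INR m) by (apply lt_0_INR; lia).
 eapply Rle_trans; [|apply bernoulli].
 2:{ assert (c / (w + INR r) <= 1). { apply Rmult_le_reg_r with (w + INR r); [lra|]. unfold Rdiv. rewrite Rmult_assoc, Rinv_l by lra. lra. } lra. }
 replace (1 + INR (m * S r) * - (c / (w + INR r))) with (w / (w + INR r)).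
 2:{ rewrite mult_INR, Hc. field. repeat split; try lra. rewrite S_INR; lra. }
 assert (Hb : 1 + INR r * (1 / w) <= (1 + 1 / w) ^ r) by (apply bernoulli; assert (0 <= 1/w) by (apply div_nn; lra); lra).
 assert (Hprod : (w / (w + 1)) ^ r * (1 + 1 / w) ^ r = 1).
 { rewrite <- Rpow_mult_distr. replace (w / (w + 1) * (1 + 1 / w)) with 1 by (field; lra). apply pow1. }
 assert (0 < (1 + 1 / w) ^ r) by (apply pow_lt; assert (0 <= 1/w) by (apply div_nn; lra); lra).
 assert (0 <= (w / (w + 1)) ^ r) by (apply pow_le; apply div_nn; lra).
 apply Rmult_le_reg_r with ((1 + 1 / w) ^ r); auto. rewrite Hprod.
 apply Rle_trans with (w / (w + INR r) * (1 + INR r * (1 / w))).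
 - right. field. lra.
 - apply Rmult_le_compat_l; auto. apply div_nn; lra.
Qed.

Lemma G_growth A c r m N : 0 < A 0%nat -> (1 <= m)%nat -> c = INR r / (INR (S r) * INR m) -> 0 <= c < A 0%nat ->
  (S r <= N)%nat ->
  (Gf A c (S r)) ^ (m * S r) * (/ INR N) ^ r <= (Gf A c N) ^ (m * S r).
Proof. intros HA Hm Hc Hc2 HN.
 replace N with (S r + (N - S r))%nat by lia. set (b := (N - S r)%nat).
 unfold Gf at 2. rewrite rprod_add. fold (Gf A c (S r)). rewrite Rpow_mult_distr.
 assert (0 < Gf A c (S r)) by (apply Gf_pos; auto). assert (0 < (Gf A c (S r)) ^ (m * S r)) by (apply pow_lt; auto).
 apply Rmult_le_compat_l; [lra|].
 set (z := fun j => A 0%nat + 1 + INR j).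
 assert (Hz : forall j, 0 < z j) by (intros; unfold z; pose proof (pos_INR j); lra).
 apply Rle_trans with ((z 0%nat / z b) ^ r).
 - apply pow_incr. split. apply Rlt_le, Rinv_0_lt_compat. apply lt_0_INR; lia.
   unfold z. change (INR 0) with 0. rewrite Rplus_0_r. rewrite plus_INR, S_INR.
   assert (0 <= INR b) by apply pos_INR. assert (0 <= INR r) by apply pos_INR.
   apply Rmult_le_reg_r with ((INR r + 1 + INR b) * (A 0%nat + 1 + INR b)); [nra|].
   replace (/ (INR r + 1 + INR b) * ((INR r + 1 + INR b) * (A 0%nat + 1 + INR b))) with (A 0%nat + 1 + INR b) by (field; lra).
   replace ((A 0%nat + 1) / (A 0%nat + 1 + INR b) * ((INR r + 1 + INR b) * (A 0%nat + 1 + INR b))) with ((A 0%nat + 1) * (INR r + 1 + INR b)) by (field; lra).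
   nra.
 - rewrite <- rprod_tele by (intros; auto). rewrite rprod_pow, rprod_pow.
   apply rprod_le. intros j Hj. split. apply pow_le. apply div_nn; [left|]; auto.
   apply factor_bound; auto.
Qed.

Lemma nsum_ge n d j : (j < n)%nat -> (d j <= nsum n d)%nat.
Proof. induction n; intros H; simpl; [lia|]. destruct (Nat.eq_dec j n); [subst; lia|]. specialize (IHn ltac:(lia)); lia. Qed.

Lemma rsum_ge_term n f i : (i < n)%nat -> (forall j, (j < n)%nat -> 0 <= f j) -> f i <= rsum n f.
Proof. induction n; intros Hi H; simpl; [lia|]. destruct (Nat.eq_dec i n).
 - subst. assert (0 <= rsum n f) by (apply rsum_nonneg; intros; apply H; lia). lra.
 - assert (f i <= rsum n f) by (apply IHn; [lia| intros; apply H; lia]). assert (0 <= f n) by (apply H; lia). lra. Qed.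

Lemma Gf_anti A c K N : 0 < A 0%nat -> 0 <= c < A 0%nat -> (K <= N)%nat -> Gf A c N <= Gf A c K.
Proof. intros HA Hc HKN. replace N with (K + (N - K))%nat by lia. unfold Gf at 1. rewrite rprod_add. fold (Gf A c K).
 assert (0 < Gf A c K) by (apply Gf_pos; auto).
 rewrite <- (Rmult_1_r (Gf A c K)) at 2. apply Rmult_le_compat_l; [lra|].
 apply Rle_trans with (rprod (N - K) (fun _ => 1)); [|rewrite rprod_one; lra]. apply rprod_le. intros j _. pose proof (pos_INR (K + j)).
 assert (0 <= c / (A 0%nat + INR (K + j))) by (apply div_nn; lra).
 assert (c / (A 0%nat + INR (K + j)) <= 1). { apply Rmult_le_reg_r with (A 0%nat + INR (K + j)); [lra|]. unfold Rdiv. rewrite Rmult_assoc, Rinv_l by lra. lra. }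
 lra. Qed.

Lemma Vb_big n v A q m r p c eps d i : good n v A q -> (1 <= m)%nat -> p = / INR m ->
  c = INR r / (INR (S r) * INR m) -> c < A 0%nat -> 0 < eps ->
  (S r <= nsum n d)%nat -> (1 <= i < n)%nat ->
  eps * INR (nsum n d) / INR (n - 1) <= INR (d i) ->
  (Gf A c (S r)) ^ (m * S r) * (eps / (INR (n - 1) * rsum n A)) ^ (S r) * INR (nsum n d)
    <= (Vb n A p c d) ^ (m * S r).
Proof.
 intros G Hm Hp Hc Hc2 He HN Hi Hdi. pose proof G as (Hn&_&_&HA&_).
 remember (nsum n d) as N eqn:HNd. set (e := (m * S r)%nat).
 assert (Hm' : 0 < INR m) by (apply lt_0_INR; lia).
 assert (Hc0 : 0 <= c) by (rewrite Hc; apply div_nn; [apply pos_INR| apply Rmult_lt_0_compat; [apply lt_0_INR; lia|auto]]).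
 assert (Hpp : 0 <= p) by (rewrite Hp; left; apply Rinv_0_lt_compat; auto).
 assert (HNp : 0 < INR N) by (apply lt_0_INR; lia).
 assert (Hn1 : 0 < INR (n - 1)) by (apply lt_0_INR; lia).
 assert (HAi : A i <= rsum n A) by (apply rsum_ge_term; [lia| intros; left; apply HA; auto]).
 remember (rsum n A) as As eqn:HAs.
 assert (HAip : 0 < A i) by (apply HA; lia).
 remember (eps / (INR (n - 1) * As)) as k eqn:Hkk.
 assert (Hk : 0 < k) by (rewrite Hkk; apply Rdiv_lt_0_compat; auto; apply Rmult_lt_0_compat; lra).
 assert (HGN : 0 < Gf A c N) by (apply Gf_pos; auto; apply HA; lia).
 assert (HH : 0 < Hf A p i (d i)) by (apply Hf_pos; auto).
 assert (HV : Gf A c N * Hf A p i (d i) <= Vb n A p c d).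
 { unfold Vb. apply Rmult_le_compat; try lra.
   - apply Gf_anti; auto; [apply HA; lia|]. rewrite HNd. apply nsum_ge; lia.
   - unfold Hs. replace (Hf A p i (d i)) with (if Nat.eqb i 0 then 0 else Hf A p i (d i))
       by (replace (Nat.eqb i 0) with false; auto; symmetry; apply Nat.eqb_neq; lia).
     apply (rsum_ge_term n (fun j => if Nat.eqb j 0 then 0 else Hf A p j (d j)) i); [lia|]. intros j Hj. destruct (Nat.eqb j 0); [lra|]. left; apply Hf_pos; auto. }
 eapply Rle_trans; [|apply pow_incr; split; [|exact HV]; left; apply Rmult_lt_0_compat; auto].
 rewrite Rpow_mult_distr.
 assert (HG1 := G_growth A c r m N (HA 0%nat ltac:(lia)) Hm Hc (conj Hc0 Hc2) HN). fold e in HG1.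
 assert (HH1 : (k * INR N) ^ S r <= (Hf A p i (d i)) ^ e).
 { unfold e. rewrite pow_mult. apply pow_incr. split. left; apply Rmult_lt_0_compat; auto.
   eapply Rle_trans; [|apply H_growth; auto].
   pose proof (pos_INR (d i)).
   apply Rle_trans with (INR (d i) / As).
   - rewrite Hkk. apply Rmult_le_reg_r with (INR (n-1) * As); [apply Rmult_lt_0_compat; lra|].
     replace (eps / (INR (n - 1) * As) * INR N * (INR (n - 1) * As)) with (eps * INR N) by (field; lra).
     replace (INR (d i) / As * (INR (n - 1) * As)) with (INR (d i) * INR (n - 1)) by (field; lra).
     apply Rmult_le_reg_r with (/ INR (n-1)); [apply Rinv_0_lt_compat; lra|].
     replace (INR (d i) * INR (n - 1) * / INR (n - 1)) with (INR (d i)) by (field; lra). exact Hdi.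
   - apply Rle_trans with (INR (d i) / A i).
     + unfold Rdiv. apply Rmult_le_compat_l; auto. apply Rinv_le_contravar; auto.
     + unfold Rdiv. apply Rmult_le_compat_r; [left; apply Rinv_0_lt_compat; auto| lra]. }
 assert (0 < Gf A c (S r) ^ e) by (apply pow_lt, Gf_pos; auto; apply HA; lia).
 assert (0 <= Gf A c (S r) ^ e * (/ INR N) ^ r) by (apply Rmult_le_pos; [lra| apply pow_le; left; apply Rinv_0_lt_compat; auto]).
 apply Rle_trans with (Gf A c (S r) ^ e * (/ INR N) ^ r * (k * INR N) ^ S r).
 - right. clearbody e. rewrite Rpow_mult_distr, pow_inv. replace (INR N ^ S r) with (INR N * INR N ^ r) by reflexivity. field. apply pow_nonzero; lra.
 - apply Rmult_le_compat; auto. left; apply pow_lt, Rmult_lt_0_compat; auto.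
Qed.

Lemma pigeon_bad n d eps : (2 <= n)%nat -> (1 <= nsum n d)%nat ->
  eps < Rabs (share1 n d - 1) ->
  exists i, (1 <= i < n)%nat /\ eps * INR (nsum n d) / INR (n - 1) <= INR (d i).
Proof.
 intros Hn HN Hb. unfold share1 in Hb. rewrite <- INR_nsum in Hb.
 assert (HNp : 0 < INR (nsum n d)) by (apply lt_0_INR; lia).
 assert (Hd0 : INR (d 0%nat) <= INR (nsum n d)) by (apply le_INR, nsum_ge; lia).
 assert (Hq : INR (d 0%nat) / INR (nsum n d) <= 1).
 { apply Rmult_le_reg_r with (INR (nsum n d)); auto. unfold Rdiv. rewrite Rmult_assoc, Rinv_l by lra. lra. }
 rewrite Rabs_left1 in Hb by lra.
 assert (Hb2 : eps * INR (nsum n d) < INR (nsum n d) - INR (d 0%nat)).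
 { replace (INR (nsum n d) - INR (d 0%nat)) with ((1 - INR (d 0%nat) / INR (nsum n d)) * INR (nsum n d)) by (field; lra).
   apply Rmult_lt_compat_r; auto. lra. }
 destruct (classic (exists i, (1 <= i < n)%nat /\ eps * INR (nsum n d) / INR (n - 1) <= INR (d i))) as [H|H]; auto.
 exfalso.
 assert (Hall : forall i, (1 <= i < n)%nat -> (fun j => if Nat.eqb j 0 then 0 else INR (d j)) i <= eps * INR (nsum n d) / INR (n - 1)).
 { intros i Hi. cbv beta. replace (Nat.eqb i 0) with false by (symmetry; apply Nat.eqb_neq; lia).
   left. apply Rnot_le_lt. intros Hc. apply H. exists i; auto. }
 pose proof (rsum_pigeon n _ _ ltac:(lia) Hall) as Hp. simpl in Hp.
 pose proof (INR_nsum n d) as Hs. rewrite rsum_split0 in Hs by lia.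
 assert (Hn1 : 0 < INR (n - 1)) by (apply lt_0_INR; lia).
 replace (INR (n - 1) * (eps * INR (nsum n d) / INR (n - 1))) with (eps * INR (nsum n d)) in Hp by (field; lra).
 lra.
Qed.

Lemma V1_big n gam M t s d : 1 <= gam -> (t <= s)%nat -> (nsum n d < M)%nat -> 1 <= V1 n gam M t s d.
Proof. intros Hg Hts HN. unfold V1.
 replace M with (nsum n d + (M - nsum n d))%nat by lia. replace s with (t + (s - t))%nat by lia.
 rewrite !pow_add. rewrite pow_inv.
 assert (0 < 2 ^ nsum n d) by (apply pow_lt; lra). assert (0 < gam ^ t) by (apply pow_lt; lra).
 assert (1 <= 2 ^ (nsum n d + (M - nsum n d) - nsum n d)) by (apply pow_R1_Rle; lra).
 assert (1 <= gam ^ (t + (s - t) - t)) by (apply pow_R1_Rle; lra).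
 replace (nsum n d + (M - nsum n d) - nsum n d)%nat with (M - nsum n d)%nat in * by lia.
 replace (t + (s - t) - t)%nat with (s - t)%nat in * by lia.
 replace (2 ^ nsum n d * 2 ^ (M - nsum n d) * / 2 ^ nsum n d * (gam ^ t * gam ^ (s - t)) / gam ^ t)
   with (2 ^ (M - nsum n d) * gam ^ (s - t)) by (field; lra).
 nra. Qed.

Lemma nsum_zero n : nsum n (fun _ => 0%nat) = 0%nat.
Proof. induction n; simpl; auto. rewrite IHn; auto. Qed.

Lemma Vb_zero n A p c : (1 <= n)%nat -> Vb n A p c (fun _ => 0%nat) = INR (n - 1).
Proof. intros Hn. unfold Vb, Hs. unfold Gf. simpl rprod. rewrite Rmult_1_l.
 rewrite (rsum_ext n _ (fun i => if Nat.eqb i 0 then 0 else 1)) by (intros; destruct (Nat.eqb i 0); reflexivity).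
 pose proof (rsum_split0 n (fun _ => 1) Hn) as H. rewrite rsum_const in H. cbv beta in H.
 replace (INR (n - 1)) with (INR n - 1) by (rewrite minus_INR by lia; simpl; ring). lra. Qed.

Theorem mainTheorem7 (n : nat) (v A q : nat -> R)
  (Hn : (2 <= n)%nat)
  (Hv : forall i : nat, (S i < n)%nat -> v (S i) <= v i)
  (Hvpos : 0 < v (n - 1)%nat)
  (HA : forall i : nat, (i < n)%nat -> 0 < A i)
  (Hq1 : q 0%nat <= 1)
  (Hq : forall i : nat, (S i < n)%nat -> q (S i) < q i)
  (Hqn : 0 <= q (n - 1)%nat) :
  as_monopoly n v A q.
Proof.
 assert (G : good n v A q) by (repeat split; auto).
 unfold as_monopoly. intros eps delta He Hd.
 destruct (pm_exists n v A q G) as (pm & Hpm & Hpm1 & Hpmd).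
 set (gam := / (1 - pm / 2)).
 assert (Hg1 : 1 < gam). { unfold gam. apply Rmult_lt_reg_l with (1 - pm/2); [lra|]. rewrite Rinv_r by lra. lra. }
 assert (HA0 : 0 < A 0%nat) by (apply HA; lia).
 assert (Hv0 : 0 < v 0%nat) by (apply (v_pos n v A q); auto; lia).
 assert (Hq0 : 0 < q 0%nat) by (eapply Rle_lt_trans; [apply (q_nn n v A q 1%nat); auto; lia| apply (q_lt n v A q); auto; lia]).
 set (w0 := v 0%nat * q 0%nat). assert (Hw0 : 0 < w0) by (unfold w0; nra).
 set (rho := v 1%nat * q 1%nat / w0).
 assert (Hrho : rho < 1).
 { unfold rho. apply Rmult_lt_reg_r with w0; auto. unfold Rdiv. rewrite Rmult_assoc, Rinv_l by lra. unfold w0.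
   assert (v 1%nat <= v 0%nat) by (apply (v_le n v A q); auto; lia).
   assert (q 1%nat < q 0%nat) by (apply (q_lt n v A q); auto; lia).
   assert (0 <= q 1%nat) by (apply (q_nn n v A q); auto; lia). assert (0 < v 1%nat) by (apply (v_pos n v A q); auto; lia). nra. }
 destruct (INR_unbounded (/ (1 - rho))) as [r Hr].
 assert (Hrr : rho * INR (S r) <= INR r).
 { rewrite S_INR. assert (0 < 1 - rho) by lra. assert (INR r * (1 - rho) > 1).
   { apply Rmult_gt_reg_l with (/ (1 - rho)). apply Rinv_0_lt_compat; lra.
     replace (/ (1 - rho) * (INR r * (1 - rho))) with (INR r) by (field; lra). lra. }
   nra. }
 destruct (INR_unbounded (/ A 0%nat)) as [m0 Hm0].
 set (m := S m0). assert (Hm : (1 <= m)%nat) by (unfold m; lia).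
 assert (Hm' : 0 < INR m) by (apply lt_0_INR; lia).
 set (p := / INR m). set (c := INR r / (INR (S r) * INR m)).
 assert (HSr : 0 < INR (S r)) by (apply lt_0_INR; lia).
 assert (Hc0 : 0 <= c) by (unfold c; apply div_nn; [apply pos_INR| apply Rmult_lt_0_compat; auto]).
 assert (Hc1 : c < A 0%nat).
 { assert (c < / INR m). { unfold c. rewrite S_INR in *. apply Rmult_lt_reg_r with (INR m * (INR r + 1)); [nra|].
     replace (INR r / ((INR r + 1) * INR m) * (INR m * (INR r + 1))) with (INR r) by (field; lra).
     replace (/ INR m * (INR m * (INR r + 1))) with (INR r + 1) by (field; lra). lra. }
   assert (/ INR m < A 0%nat).
   { apply Rmult_lt_reg_r with (INR m); auto. rewrite Rinv_l by lra.
     unfold m. rewrite S_INR. apply Rmult_lt_reg_l with (/ A 0%nat). apply Rinv_0_lt_compat; auto.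
     replace (/ A 0%nat * (A 0%nat * (INR m0 + 1))) with (INR m0 + 1) by (field; lra). lra. }
   lra. }
 assert (Hw : forall i, (1 <= i < n)%nat -> v i * q i * p <= v 0%nat * q 0%nat * c).
 { intros i Hi. assert (v i <= v 1%nat) by (apply (v_le n v A q); auto; lia).
   assert (q i <= q 1%nat) by (apply (q_le n v A q); auto; lia).
   assert (0 <= q i) by (apply (q_nn n v A q); auto; lia). assert (0 < v i) by (apply (v_pos n v A q); auto; lia).
   assert (0 <= q 1%nat) by (apply (q_nn n v A q); auto; lia).
   assert (v i * q i <= v 1%nat * q 1%nat) by nra.
   assert (v 1%nat * q 1%nat = rho * w0) by (unfold rho; field; lra).
   assert (rho * w0 * INR (S r) <= w0 * INR r) by nra.
   unfold p, c. apply Rmult_le_reg_r with (INR (S r) * INR m); [nra|].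
   replace (v i * q i * / INR m * (INR (S r) * INR m)) with (v i * q i * INR (S r)) by (field; lra).
   replace (v 0%nat * q 0%nat * (INR r / (INR (S r) * INR m)) * (INR (S r) * INR m)) with (w0 * INR r) by (unfold w0; field; lra).
   nra. }
 set (e := (m * S r)%nat).
 assert (Hg0 : 0 < Gf A c (S r) ^ e) by (apply pow_lt, Gf_pos; auto).
 assert (HAs : 0 < rsum n A).
 { eapply Rlt_le_trans; [apply HA0|]. apply (rsum_ge_term n A 0%nat); [lia|intros; left; apply HA; auto]. }
 assert (Hn1 : 0 < INR (n - 1)) by (apply lt_0_INR; lia).
 set (kap := eps / (INR (n - 1) * rsum n A)).
 assert (Hkap : 0 < kap) by (unfold kap; apply Rdiv_lt_0_compat; auto; apply Rmult_lt_0_compat; auto).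
 set (C := Gf A c (S r) ^ e * kap ^ S r).
 assert (HC : 0 < C) by (unfold C; apply Rmult_lt_0_compat; auto; apply pow_lt; auto).
 set (L := 2 * INR (n - 1) / delta).
 assert (HL : 0 < L) by (unfold L; apply Rdiv_lt_0_compat; lra).
 destruct (INR_unbounded (L ^ e / C)) as [M0 HM0]. set (M := (M0 + S r)%nat).
 destruct (INR_unbounded ((2 ^ M * gam * 2 / delta) / (gam - 1))) as [t0 Ht0].
 exists t0. intros t T Ht.
 unfold prob_far.
 apply Rle_trans with (V1 n gam M t 1 (fun _ => 0%nat) + Vb n A p c (fun _ => 0%nat) / L).
 - assert (HVnn : forall d, 0 <= Vb n A p c d) by (intros; apply Vb_nn; auto; [lia| unfold p; left; apply Rinv_0_lt_compat; auto]).
   assert (HL' : 0 < / L) by (apply Rinv_0_lt_compat; auto).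
   apply (hit_bound n v A q (far_after n eps t) (Inv n q) (fun s d => V1 n gam M t s d + Vb n A p c d / L)).
   + intros s d _. pose proof (V1_nn n gam M t s d ltac:(lra)). pose proof (HVnn d).
     assert (0 <= Vb n A p c d / L) by (apply div_nn; auto). lra.
   + intros s d _ HB. unfold far_after in HB. apply andb_prop in HB. destruct HB as [Hts HB].
     apply Nat.leb_le in Hts. destruct (Rlt_dec eps (Rabs (share1 n d - 1))) as [Hbad|]; [|discriminate].
     pose proof (HVnn d). assert (0 <= Vb n A p c d / L) by (apply div_nn; auto).
     destruct (Compare_dec.lt_dec (nsum n d) M) as [HNM|HNM].
     * pose proof (V1_big n gam M t s d ltac:(lra) Hts HNM). lra.
     * pose proof (V1_nn n gam M t s d ltac:(lra)).
       assert (HMN : (M <= nsum n d)%nat) by lia.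
       destruct (pigeon_bad n d eps Hn ltac:(unfold M in HMN; lia) Hbad) as (i & Hi & Hdi).
       pose proof (Vb_big n v A q m r p c eps d i G Hm eq_refl eq_refl Hc1 He ltac:(unfold M in HMN; lia) Hi Hdi) as HB1.
       fold e kap C in HB1.
       assert (INR M0 <= INR (nsum n d)) by (apply le_INR; unfold M in HMN; lia).
       assert (L ^ e < C * INR M0).
       { apply Rmult_lt_reg_r with (/ C). apply Rinv_0_lt_compat; auto.
         replace (C * INR M0 * / C) with (INR M0) by (field; lra). exact HM0. }
       assert (HVL : L <= Vb n A p c d).
       { destruct (Rle_lt_dec L (Vb n A p c d)) as [|Hlt]; auto.
         assert (Vb n A p c d ^ e < L ^ e) by (apply pow_lt_strict; auto; unfold e; lia). nra. }
       assert (1 <= Vb n A p c d / L).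
       { apply Rmult_le_reg_r with L; auto. unfold Rdiv. rewrite Rmult_assoc, Rinv_l by lra. lra. }
       lra.
   + intros s d HI.
     rewrite (rsum_ext n _ (fun i => pbuy n v A q d i * V1 n gam M t (S s) (incr d i) + / L * (pbuy n v A q d i * Vb n A p c (incr d i))))
       by (intros; unfold Rdiv; ring).
     rewrite rsum_plus, rsum_scal.
     pose proof (V1_super n v A q pm d s M t G Hpm Hpm1 (Hpmd d HI)) as H1. cbv zeta in H1. fold gam in H1.
     pose proof (Vb_super n v A q p c d G ltac:(unfold p; left; apply Rinv_0_lt_compat; auto) (conj Hc0 Hc1) Hw) as H2.
     assert (H3 : / L * (rsum n (fun i => pbuy n v A q d i * Vb n A p c (incr d i)) +
        (1 - rsum n (fun i => pbuy n v A q d i)) * Vb n A p c d) <= / L * Vb n A p c d)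
       by (apply Rmult_le_compat_l; lra).
     unfold Rdiv. lra.
   + intros d i HI Hi Hp. apply Inv_incr with v A; auto.
   + intros d i Hi. apply pbuy_nn; auto.
   + intros d. apply sum_pbuy_le1; auto.
   + apply Inv0.
 - rewrite Vb_zero by lia.
   replace (INR (n - 1) / L) with (delta / 2) by (unfold L; field; lra).
   assert (Hns : nsum n (fun _ => 0%nat) = 0%nat) by (apply nsum_zero).
   unfold V1. rewrite Hns. simpl pow at 2 3.
   assert (Hgt : 1 + INR t * (gam - 1) <= gam ^ t).
   { replace gam with (1 + (gam - 1)) at 2 by ring. apply bernoulli; lra. }
   assert (INR t0 <= INR t) by (apply le_INR; auto).
   assert (2 ^ M * gam * 2 / delta < INR t * (gam - 1)).
   { apply Rmult_lt_reg_r with (/ (gam - 1)). apply Rinv_0_lt_compat; lra.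
     replace (INR t * (gam - 1) * / (gam - 1)) with (INR t) by (field; lra). unfold Rdiv at 2 in Ht0. lra. }
   assert (0 < 2 ^ M) by (apply pow_lt; lra).
   assert (2 ^ M * 1 * (gam * 1) / gam ^ t <= delta / 2).
   { apply Rmult_le_reg_r with (gam ^ t * (2 / delta)). apply Rmult_lt_0_compat; [apply pow_lt|apply Rdiv_lt_0_compat]; lra.
     replace (2 ^ M * 1 * (gam * 1) / gam ^ t * (gam ^ t * (2 / delta))) with (2 ^ M * gam * 2 / delta)
       by (field; split; [lra| apply pow_nonzero; lra]).
     replace (delta / 2 * (gam ^ t * (2 / delta))) with (gam ^ t) by (field; lra). lra. }
   lra.
Qed.
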